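(* If $G\subset\Sigma_n$ does not act isotypically on $\{1,\dots,n\}$, then $|\Pi_n|^G$ is $W_{\Sigma_n}(G)$-equivariantly collapsible.
   Context: $\Pi_n$ is the poset of proper nontrivial partitions of $\{1,\dots,n\}$ ordered by refinement; $|\Pi_n|$ is the realisation of its order complex, with the induced $\Sigma_n$-action, and $|\Pi_n|^G$ its $G$-fixed points with action of $W_{\Sigma_n}(G)=N_{\Sigma_n}(G)/G$. $G$ acts isotypically if all $G$-orbits on $\{1,\dots,n\}$ are isomorphic $G$-sets. Equivariantly collapsible means reducible to a point by finitely many elementary equivariant collapses. *)

(* Defs.v *)
From HB Require Import structures.
From mathcomp Require Import all_boot all_fingroup.
Set Implicit Arguments. Unset Strict Implicit. Unset Printing Implicit Defensive.

(* A (finite, abstract) simplicial complex on a vertex finType V is given by its set of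
   nonempty faces K : {set {set V}}. *)

Section Collapse.
Variables (V I : finType) (act : I -> V -> V) (H : {set I}).

Definition elem_equiv_collapse (K K' : {set {set V}}) : Prop :=
  exists s t : {set V},
    [/\ s \in K, t \in K, s \proper t & #|t| = #|s|.+1] /\
    (forall r, r \in K -> s \subset r -> r = s \/ r = t) /\
    K' = K :\: [set act g @: x | g : I in H, x : {set V} in [set s; t]].

Inductive equiv_collapsible : {set {set V}} -> Prop :=
  | ecoll_point (v : V) : equiv_collapsible [set [set v]]
  | ecoll_step (K K' : {set {set V}}) :
      elem_equiv_collapse K K' -> equiv_collapsible K' -> equiv_collapsible K.

End Collapse.

Section Partitions.
Variable n : nat.

Definition part := {set {set 'I_n}}.

(* set partitions of {1..n} (here 'I_n), no empty blocks *)
Definition is_part (P : part) : bool := partition P [set: 'I_n].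

Definition discrete_part : part := [set [set x] | x : 'I_n].
Definition indiscrete_part : part := [set [set: 'I_n]].

Definition in_Pi (P : part) : bool :=
  [&& is_part P, P != discrete_part & P != indiscrete_part].

Definition refines (P Q : part) : bool :=
  [forall B in P, exists C in Q, B \subset C].

Definition act_part (g : {perm 'I_n}) (P : part) : part := [set g @: B | B : {set 'I_n} in P].

Definition in_Pi_fix (G : {set {perm 'I_n}}) (P : part) : bool :=
  in_Pi P && [forall g in G, act_part g P == P].

(* Order complex of Pi_n^G: nonempty chains; its realisation is |Pi_n|^G. *)
Definition fixed_order_complex (G : {set {perm 'I_n}}) : {set {set part}} :=
  [set s : {set part} | [&& s != set0,
     [forall P in s, in_Pi_fix G P] &
     [forall P in s, forall Q in s, refines P Q || refines Q P]]].

Definition orbG (G : {set {perm 'I_n}}) (x : 'I_n) : {set 'I_n} := [set g x | g : {perm 'I_n} in G].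

Definition isotypic (G : {set {perm 'I_n}}) : Prop :=
  forall x y : 'I_n, exists f : 'I_n -> 'I_n,
    [/\ {in orbG G x &, injective f},
        f @: orbG G x = orbG G y
      & forall g z, g \in G -> z \in orbG G x -> f (g z) = g (f z)].

End Partitions.

(* Main.v *)
Require Import Defs.
From mathcomp Require Import all_boot all_fingroup.
Set Implicit Arguments. Unset Strict Implicit. Unset Printing Implicit Defensive.


Section Morse.
Variables (V : finType) (I : finGroupType) (act : I -> V -> V) (H : {group I}).
Hypothesis act1 : forall x, act 1 x = x.
Hypothesis actM : forall g h x, act (g * h)%g x = act h (act g x).

Definition sact g (s : {set V}) := act g @: s.

Lemma sactM g h s : sact (g * h)%g s = sact h (sact g s).
Proof. by rewrite /sact -imset_comp; apply: eq_imset => x /=; rewrite actM. Qed.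

Lemma sact1 s : sact 1 s = s.
Proof. by rewrite /sact (eq_imset _ act1) imset_id. Qed.

Lemma sactK g s : sact g^-1 (sact g s) = s.
Proof. by rewrite -sactM mulgV sact1. Qed.

Lemma morse (wt : {set V} -> nat) (ap : {set V} -> V) (L : {set {set V}}) :
  equiv_collapsible act H L ->
  forall D : {set {set V}},
  (forall g s, g \in H -> s \in D -> sact g s \in D) ->
  (forall g s, g \in H -> s \in D -> ap (sact g s) = act g (ap s)) ->
  (forall s, s \in D -> ap s \notin s) ->
  (forall s t, s \in D -> t \in D -> ap s |: s = ap t |: t -> s = t) ->
  (forall s t, s \in D -> t \in D -> s \subset ap t |: t -> s != t -> wt s < wt t) ->
  (forall r s, r \in L -> s \in D -> ~~ (s \subset r)) ->
  equiv_collapsible act H (L :|: D :|: [set ap s |: s | s in D]).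
Proof.
move=> HL D; move: {2}#|D| (leqnn #|D|) => k; elim: k D => [|k IH] D.
  rewrite leqn0 cards_eq0 => /eqP -> *.
  by rewrite imset0 !setU0.
move=> Dk Dinv apeq apn apinj wtlt LD.
have [D0|[s0 s0D]] := set_0Vmem D.
  by rewrite D0 imset0 !setU0.
case: (arg_maxnP wt s0D) => s sD smax.
have {}sD : s \in D := sD.
have {}smax : forall j, j \in D -> wt j <= wt s := smax.
set O := [set sact g s | g in H].
have OD : O \subset D by apply/subsetP=> u /imsetP[g gH ->]; exact: Dinv.
have sO : s \in O by apply/imsetP; exists 1%g; rewrite ?group1 ?sact1.
set D' := D :\: O.
have D'D : D' \subset D by exact: subsetDl.
have notLD r : r \in L -> r \notin D.
  by move=> rL; apply/negP=> rD; have := LD r r rL rD; rewrite subxx.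
have notDp u : u \in D -> ap u |: u \notin D.
  move=> uD; apply/negP=> pD.
  have h1 := wtlt u _ uD pD (subset_trans (subsetUr _ _) (subsetUr _ _)).
  have h2 := wtlt _ u pD uD (subxx _).
  have ne : u != ap u |: u.
    by apply/negP=> /eqP e; move: (apn u uD); rewrite {2}e setU11.
  have l1 := h1 ne; rewrite eq_sym in ne; have l2 := h2 ne.
  by move: (ltn_trans l1 l2); rewrite ltnn.
have notLp r u : r \in L -> u \in D -> r != ap u |: u.
  by move=> rL uD; apply/eqP=> e; have := LD r u rL uD; rewrite e subsetUr.
apply: (@ecoll_step _ _ _ _ _ (L :|: D' :|: [set ap u |: u | u in D'])).
  exists s, (ap s |: s); split; first split.
  - by rewrite !inE sD orbT.
  - by rewrite inE; apply/orP; right; apply/imsetP; exists s.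
  - by rewrite properEcard subsetUr cardsU1 apn //= add1n ltnSn.
  - by rewrite cardsU1 apn.
  split.
    move=> r; rewrite !inE => /orP[/orP[rL|rD]|/imsetP[u uD ->]] sr.
    - by have := LD r s rL sD; rewrite sr.
    - left; apply/eqP; apply/negP=> /negP ne.
      rewrite eq_sym in ne.
      have := wtlt s r sD rD (subset_trans sr (subsetUr _ _)) ne.
      by rewrite ltnNge smax.
    - right; case: (eqVneq s u) => [->//|ne].
      by have := wtlt s u sD uD sr ne; rewrite ltnNge smax.
  apply/setP=> r.
  have orbE : (r \in [set act g @: x | g : I in H, x : {set V} in [set s; ap s |: s]])
     = (r \in O) || (r \in [set ap u |: u | u in O]).
    apply/imset2P/orP.
      case=> g x gH; rewrite !inE => /orP[]/eqP -> ->.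
        by left; apply/imsetP; exists g.
      right; apply/imsetP; exists (sact g s); first by apply/imsetP; exists g.
      by rewrite apeq // /sact imsetU1.
    case=> /imsetP.
      by case=> g gH ->; exists g s; rewrite ?inE ?eqxx.
    case=> u /imsetP[g gH ->] ->; exists g (ap s |: s); rewrite ?inE ?eqxx ?orbT //.
    by rewrite apeq // /sact imsetU1.
  rewrite in_setD orbE !in_setU in_setD.
  case: (boolP (r \in L)) => rL /=.
    rewrite ?(negbTE (notLD r rL)) ?orbT /=.
    have -> : (r \in O) = false.
      by apply/negbTE/negP=> /(subsetP OD) rD; move: (notLD r rL); rewrite rD.
    case: imsetP => //= [[u /(subsetP OD) uD e]].
    by move: (notLp r u rL uD); rewrite e eqxx.
  case: (boolP (r \in D)) => rD /=.
    have np : forall A : {set {set V}}, A \subset D -> r \in [set ap u |: u | u in A] = false.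
      move=> A AD; apply/negbTE/imsetP=> [[u /(subsetP AD) uD e]].
      by move: (notDp u uD); rewrite -e rD.
    by rewrite !np ?subsetDl // !orbF !andbT.
  case: (boolP (r \in [set ap u |: u | u in D])) => /= [/imsetP[u uD ->]|rp].
    have rO : (ap u |: u \in O) = false.
      by apply/negbTE/negP=> /(subsetP OD) pD; move: (notDp u uD); rewrite pD.
    have eqp : forall A : {set {set V}}, A \subset D -> (ap u |: u \in [set ap v |: v | v in A]) = (u \in A).
      move=> A AD; apply/imsetP/idP => [[v vA e]|uA]; last by exists u.
      by rewrite (apinj u v uD (subsetP AD v vA) e).
    rewrite rO /= !eqp ?subsetDl // inE uD andbT.
    by case: (u \in O).
  have np : forall A : {set {set V}}, A \subset D -> r \in [set ap u |: u | u in A] = false.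
    move=> A AD; apply/negbTE/imsetP=> [[u /(subsetP AD) uD e]].
    by move: rp; rewrite e; move/imsetP; apply; exists u.
  by rewrite !np ?subsetDl // !andbF.
apply: IH.
- rewrite -ltnS; apply: leq_trans Dk; apply: proper_card.
  by rewrite properE D'D; apply/subsetPn; exists s; rewrite // inE sO.
- move=> g u gH; rewrite inE => /andP[uO uD]; rewrite inE Dinv // andbT.
  apply/imsetP=> [[h hH e]]; move/negP: uO; apply; apply/imsetP.
  exists (h * g^-1)%g; first by rewrite groupM ?groupV.
  by rewrite sactM -e sactK.
- by move=> g u gH /(subsetP D'D) uD; apply: apeq.
- by move=> u /(subsetP D'D); apply: apn.
- by move=> u v /(subsetP D'D) ? /(subsetP D'D) ?; apply: apinj.
- by move=> u v /(subsetP D'D) ? /(subsetP D'D) ?; apply: wtlt.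
- by move=> r u rL /(subsetP D'D); apply: LD.
Qed.
End Morse.


Section PosetCollapse.
Variables (V : finType) (I : finGroupType) (act : I -> V -> V) (H : {group I}).
Hypothesis act1 : forall x, act 1 x = x.
Hypothesis actM : forall g h x, act (g * h)%g x = act h (act g x).
Variables (X : {set V}) (le : rel V) (c : V) (f : V -> V).
Hypothesis le_refl : forall P, P \in X -> le P P.
Hypothesis le_anti : forall P Q, P \in X -> Q \in X -> le P Q -> le Q P -> P = Q.
Hypothesis le_trans : forall P Q R, P \in X -> Q \in X -> R \in X -> le P Q -> le Q R -> le P R.
Hypothesis actX : forall g P, g \in H -> P \in X -> act g P \in X.
Hypothesis act_le : forall g P Q, g \in H -> P \in X -> Q \in X -> le (act g P) (act g Q) = le P Q.
Hypothesis cX : c \in X.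
Hypothesis act_c : forall g, g \in H -> act g c = c.
Hypothesis fX : forall Q, Q \in X -> f Q \in X.
Hypothesis f_le : forall Q, Q \in X -> le (f Q) Q.
Hypothesis f_lec : forall Q, Q \in X -> le (f Q) c.
Hypothesis f_meet : forall Q R, Q \in X -> R \in X -> le R Q -> le R c -> le R (f Q).

Definition chainb (s : {set V}) := [&& s != set0, s \subset X &
   [forall P in s, forall Q in s, le P Q || le Q P]].
Definition chainK := [set s : {set V} | chainb s].
Lemma chainKE s : (s \in chainK) = chainb s.
Proof. by rewrite inE. Qed.

Lemma actK g x : act (g^-1)%g (act g x) = x.
Proof. by rewrite -actM mulgV act1. Qed.
Lemma actKV g x : act g (act (g^-1)%g x) = x.
Proof. by rewrite -actM mulVg act1. Qed.
Lemma act_inj g : injective (act g).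
Proof. by move=> x y e; rewrite -(actK g x) e actK. Qed.

Lemma chainKP (s : {set V}) : s \in chainK ->
  [/\ s != set0, s \subset X & forall P Q, P \in s -> Q \in s -> le P Q || le Q P].
Proof.
rewrite inE /chainb => /and3P[s0 sX /forall_inP ch]; split=> // P Q Ps Qs.
by have /forall_inP := ch P Ps; apply.
Qed.

Lemma chainKI (s : {set V}) : s != set0 -> s \subset X ->
  (forall P Q, P \in s -> Q \in s -> le P Q || le Q P) -> s \in chainK.
Proof.
move=> s0 sX ch; rewrite inE /chainb s0 sX /=; apply/forall_inP=> P Ps.
by apply/forall_inP=> Q Qs; apply: ch.
Qed.

Lemma chainK_sub (s : {set V}) t : s \in chainK -> t != set0 -> t \subset s -> t \in chainK.
Proof.
case/chainKP=> _ sX ch t0 ts; apply: chainKI => //; first exact: subset_trans ts sX.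
by move=> P Q /(subsetP ts) Ps /(subsetP ts) Qs; apply: ch.
Qed.

Lemma chainK_act g s : g \in H -> s \in chainK -> sact act g s \in chainK.
Proof.
move=> gH /chainKP[s0 sX ch]; apply: chainKI.
- by rewrite /sact imset_eq0.
- by apply/subsetP=> _ /imsetP[P Ps ->]; apply: actX => //; apply: (subsetP sX).
- move=> _ _ /imsetP[P Ps ->] /imsetP[Q Qs ->].
  by rewrite !act_le ?ch // (subsetP sX).
Qed.

Definition wtV P := #|[set Q in X | le P Q]|.

Lemma wtV_lt P Q : P \in X -> Q \in X -> le P Q -> P != Q -> wtV Q < wtV P.
Proof.
move=> PX QX PQ nPQ; apply: proper_card; rewrite properE; apply/andP; split.
  by apply/subsetP=> R; rewrite !inE => /andP[RX QR]; rewrite RX (le_trans PX QX RX).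
apply/subsetPn; exists P; first by rewrite inE PX le_refl.
rewrite inE PX /=; apply/negP=> QP; move/negP: nPQ; apply; apply/eqP.
exact: le_anti.
Qed.

Lemma wtV_act g P : g \in H -> P \in X -> wtV (act g P) = wtV P.
Proof.
move=> gH PX; rewrite /wtV -[RHS](card_imset _ (@act_inj g)); apply: eq_card => Q.
rewrite inE; apply/andP/imsetP.
  case=> QX le1; exists (act (g^-1)%g Q); last by rewrite actKV.
  have g'H : (g^-1)%g \in H by rewrite groupV.
  rewrite inE actX //= -(act_le gH) ?actX // actKV //.
by case=> R; rewrite inE => /andP[RX PR] ->; rewrite actX // act_le.
Qed.

Lemma f_act g Q : g \in H -> Q \in X -> f (act g Q) = act g (f Q).
Proof.
move=> gH QX; have g'H : (g^-1)%g \in H by rewrite groupV.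
have gQX : act g Q \in X by apply: actX.
apply: le_anti; rewrite ?actX ?fX //.
- rewrite -(@act_le (g^-1)%g _ _ g'H (fX gQX) (actX gH (fX QX))) actK; apply: f_meet; rewrite ?actX ?fX //.
    by rewrite -(act_le gH) ?actX ?fX // actKV f_le.
  by rewrite -(act_le gH) ?actX ?fX // actKV act_c // f_lec.
- apply: f_meet; rewrite ?actX ?fX // ?act_le ?fX ?f_le //.
  by rewrite -(act_c gH) act_le ?fX ?f_lec.
Qed.

Definition isQ (s : {set V}) Q := [&& Q \in s, ~~ le Q c & [forall P in s, ~~ le P c ==> le Q P]].
Definition Qs (s : {set V}) := odflt c [pick Q | isQ s Q].

Lemma isQP (s : {set V}) Q : isQ s Q -> [/\ Q \in s, ~~ le Q c & forall P, P \in s -> ~~ le P c -> le Q P].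
Proof.
case/and3P=> Qin nQ /forall_inP h; split=> // P Ps nP.
by move/implyP: (h P Ps); apply.
Qed.

Lemma isQI (s : {set V}) Q : Q \in s -> ~~ le Q c -> (forall P, P \in s -> ~~ le P c -> le Q P) -> isQ s Q.
Proof.
move=> Qin nQ h; rewrite /isQ Qin nQ /=; apply/forall_inP=> P Ps; apply/implyP; exact: h.
Qed.

Lemma Qs_eq (s : {set V}) Q : s \subset X -> isQ s Q -> Qs s = Q.
Proof.
move=> sX iQ; rewrite /Qs; case: pickP => [Q' iQ'|/(_ Q)]; last by rewrite iQ.
case/isQP: iQ => Qin nQ hQ; case/isQP: iQ' => Q's nQ' hQ' /=.
by apply: le_anti; [apply: (subsetP sX)|apply: (subsetP sX)|apply: hQ'|apply: hQ].
Qed.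

Lemma Qs_ex (s : {set V}) P : s \in chainK -> P \in s -> ~~ le P c -> isQ s (Qs s).
Proof.
case/chainKP=> _ sX ch Ps nP.
have Pin : P \in [pred R in s | ~~ le R c] by rewrite inE Ps.
case: (arg_maxnP wtV Pin) => Q /andP[Qin nQ] Qmax.
suff iQ : isQ s Q by rewrite (Qs_eq sX iQ).
apply: isQI => // R Rs nR; have /orP[//|RQ] := ch Q R Qin Rs.
case: (eqVneq R Q) => [->|ne]; first by rewrite le_refl // (subsetP sX).
have := wtV_lt (subsetP sX R Rs) (subsetP sX Q Qin) RQ ne.
move=> lt; have h : geq (wtV Q) (wtV R) by apply: Qmax; apply/andP. 
by move: h => /= h; move: lt; rewrite ltnNge h.
Qed.

Definition K1 := [set s in chainK | [forall P in s, le P c]].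
Lemma K1E s : (s \in K1) = (s \in chainK) && [forall P in s, le P c].
Proof. by rewrite /K1 in_set. Qed.

Definition hasN (s : {set V}) := [exists P in s, ~~ le P c].
Definition D1 := [set s in chainK | hasN s && (f (Qs s) \notin s)].
Definition ap1 (s : {set V}) := f (Qs s).
Definition wt1 (s : {set V}) := wtV (Qs s) * #|V|.+1 + #|s|.

Lemma hasNP (s : {set V}) : reflect (exists2 P, P \in s & ~~ le P c) (hasN s).
Proof. exact: exists_inP. Qed.

Lemma D1P (s : {set V}) : s \in D1 -> [/\ s \in chainK, isQ s (Qs s) & f (Qs s) \notin s].
Proof.
rewrite inE => /andP[sK /andP[/hasNP[P Ps nP] nf]]; split=> //.
exact: Qs_ex Ps nP.
Qed.

Lemma QsX (s : {set V}) : s \in D1 -> Qs s \in X.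
Proof. by case/D1P=> /chainKP[_ sX _] /isQP[Qs _ _] _; apply: (subsetP sX). Qed.

Lemma comp_f (s : {set V}) P : s \in D1 -> P \in s ->
  le (f (Qs s)) P || le P (f (Qs s)).
Proof.
move=> sD Ps; have QX := QsX sD.
case/D1P: sD => /chainKP[_ sX ch] /isQP[Qin nQ hQ] _.
have PX := subsetP sX P Ps.
case: (boolP (le P c)) => Pc; last by rewrite (le_trans (fX QX) QX PX) ?f_le ?hQ.
case/orP: (ch P (Qs s) Ps Qin) => h.
  by rewrite f_meet ?orbT.
by rewrite (le_trans (fX QX) QX PX) ?f_le.
Qed.

Lemma D1_plus (s : {set V}) : s \in D1 -> ap1 s |: s \in chainK.
Proof.
move=> sD; have QX := QsX sD; have cf := comp_f sD.
case/D1P: (sD) => /chainKP[_ sX ch] _ _.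
apply: chainKI.
- by apply/set0Pn; exists (ap1 s); rewrite setU11.
- by rewrite subUset sub1set fX.
move=> P Q; rewrite !inE => /orP[/eqP->|Ps] /orP[/eqP->|Qin].
- by rewrite le_refl ?fX.
- exact: cf.
- by rewrite orbC; exact: cf.
- exact: ch.
Qed.

Lemma Qs_plus (s : {set V}) : s \in D1 -> Qs (ap1 s |: s) = Qs s.
Proof.
move=> sD; have QX := QsX sD.
case/D1P: (sD) => /chainKP[_ sX _] /isQP[Qin nQ hQ] _.
apply: Qs_eq; first by rewrite subUset sub1set fX.
apply: isQI; rewrite ?setU1r //.
move=> P; rewrite in_setU1 => /orP[/eqP->|Ps]; last exact: hQ.
by rewrite /ap1 f_lec.
Qed.

Lemma Qs_act g s : g \in H -> s \in D1 -> Qs (sact act g s) = act g (Qs s).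
Proof.
move=> gH sD; have QX := QsX sD.
case/D1P: (sD) => sK /isQP[Qin nQ hQ] _; have /chainKP[_ sX _] := sK.
have /chainKP[_ gsX _] := chainK_act gH sK.
apply: Qs_eq => //; apply: isQI.
- by apply/imsetP; exists (Qs s).
- by rewrite -{1}(act_c gH) act_le.
- move=> _ /imsetP[P Ps ->]; rewrite -{1}(act_c gH) !act_le ?cX ?(subsetP sX P Ps) //.
  exact: hQ.
Qed.

Lemma eq1 : chainK = K1 :|: D1 :|: [set ap1 s |: s | s in D1].
Proof.
apply/setP=> s; apply/idP/idP.
  move=> sK; rewrite !inE -chainKE sK /=.
  case: (boolP (hasN s)) => [hN|nN]; last first.
    apply/orP; left; apply/orP; left; apply/forall_inP=> P Ps.
    by apply: contraR nN => nP; apply/hasNP; exists P.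
  case/hasNP: (hN) => P0 P0s nP0.
  have iQ := Qs_ex sK P0s nP0.
  case: (boolP (f (Qs s) \in s)) => fs; last by rewrite orbT.
  apply/orP; right; apply/imsetP; exists (s :\ f (Qs s)).
    case/isQP: (iQ) => Qin nQ hQ.
    have /chainKP[_ sX _] := sK.
    have QX := subsetP sX _ Qin.
    have Qne : Qs s != f (Qs s).
      by apply/eqP=> e; move: nQ; rewrite {1}e f_lec.
    have Qin2 : Qs s \in s :\ f (Qs s) by rewrite !inE Qne Qin.
    have s'K : s :\ f (Qs s) \in chainK.
      by apply: chainK_sub sK _ (subD1set _ _); apply/set0Pn; exists (Qs s).
    have iQ' : isQ (s :\ f (Qs s)) (Qs s).
      by apply: isQI => // P /setD1P[_ Ps]; apply: hQ.
    rewrite inE -?chainKE s'K /=; apply/andP; split; first by apply/hasNP; exists (Qs s).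
    rewrite (Qs_eq _ iQ') ?setD11 //.
    by have /chainKP[] := s'K.
  have /chainKP[_ sX _] := sK.
  rewrite /ap1 (@Qs_eq _ (Qs s)).
  - by rewrite setD1K.
  - by apply: subset_trans (subD1set _ _) sX.
  case/isQP: (iQ) => Qin nQ hQ.
  have Qne : Qs s != f (Qs s).
    by apply/eqP=> e; move: nQ; rewrite {1}e f_lec // (subsetP sX).
  by apply: isQI => [|//|P /setD1P[_ Ps]]; [rewrite !inE Qne | apply: hQ].
rewrite !inE => /orP[/orP[/andP[]//|/andP[]//]|/imsetP[u uD ->]].
by rewrite -chainKE D1_plus.
Qed.

Lemma wtV_le_card (s : {set V}) : #|s| < #|V|.+1.
Proof. by rewrite ltnS max_card. Qed.

Lemma collapse1 : equiv_collapsible act H K1 -> equiv_collapsible act H chainK.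
Proof.
move=> HK1; rewrite eq1; apply: (@morse _ _ _ _ act1 actM wt1) => //.
- move=> g s gH sD; have sK := (let: And3 a _ _ := D1P sD in a).
  rewrite /D1 in_set chainK_act //=; apply/andP; split.
    case/D1P: (sD) => _ /isQP[Qin nQ _] _; apply/hasNP; exists (act g (Qs s)).
      by apply/imsetP; exists (Qs s).
    by rewrite -{1}(act_c gH) act_le ?cX ?(QsX sD).
  rewrite Qs_act // f_act ?QsX // /sact mem_imset; last exact: act_inj.
  by case/D1P: sD.
- by move=> g s gH sD; rewrite /ap1 Qs_act // f_act ?QsX.
- by move=> s /D1P[].
- move=> s t sD tD e.
  have ea : ap1 s = ap1 t by rewrite /ap1 -(Qs_plus sD) -(Qs_plus tD) e.
  case/D1P: sD => _ _ ns; case/D1P: tD => _ _ nt.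
  by rewrite -(setU1K ns) -(setU1K nt) -/(ap1 s) -/(ap1 t) e ea.
- move=> s t sD tD sub ne.
  have QsX' := QsX sD; have QtX := QsX tD.
  case/D1P: (sD) => _ /isQP[Qss nQs hQs] nfs.
  case/D1P: (tD) => /chainKP[_ tX _] /isQP[Qts nQt hQt] _.
  have Qst : Qs s \in t.
    move: (subsetP sub _ Qss); rewrite in_setU1 => /orP[/eqP e|//].
    by move: nQs; rewrite e /ap1 f_lec.
  have le1 := hQt _ Qst nQs.
  rewrite /wt1; case: (eqVneq (Qs s) (Qs t)) => [eQ|nQ].
    rewrite eQ ltn_add2l; apply: proper_card; rewrite properEneq ne /=.
    apply/subsetP=> P Ps; move: (subsetP sub P Ps); rewrite in_setU1 => /orP[/eqP e|//].
    by move: nfs; rewrite eQ -/(ap1 t) -e Ps.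
  rewrite eq_sym in nQ; have lt := wtV_lt QtX QsX' le1 nQ.
  apply: (@leq_trans ((wtV (Qs s)).+1 * #|V|.+1)).
    by rewrite mulSn addnC ltn_add2r wtV_le_card.
  by apply: leq_trans (leq_addr _ _); rewrite leq_mul2r lt orbT.
- move=> r s; rewrite K1E => /andP[_ /forall_inP rc] /D1P[_ /isQP[Qin nQ _] _].
  by apply/negP=> /subsetP/(_ _ Qin)/rc; apply/negP.
Qed.

Definition D2 := [set s in K1 | c \notin s].

Lemma D2E s : (s \in D2) = (s \in K1) && (c \notin s).
Proof. by rewrite /D2 in_set. Qed.

Lemma eq2 : K1 = [set [set c]] :|: D2 :|: [set (fun _ => c) s |: s | s in D2].
Proof.
apply/setP=> s; rewrite !in_setU in_set1 D2E; apply/idP/idP.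
  move=> sK1; rewrite sK1 /=.
  case: (boolP (c \in s)) => cs; last by rewrite orbT.
  case: (eqVneq s [set c]) => [//|ne] /=.
  apply/imsetP; exists (s :\ c); last by rewrite setD1K.
  move: sK1; rewrite K1E => /andP[sK /forall_inP sc].
  rewrite D2E K1E setD11 andbT; apply/andP; split.
    apply: chainK_sub sK _ (subD1set _ _).
    by apply: contraNneq ne => e; rewrite -(setD1K cs) e setU0.
  by apply/forall_inP=> P /setD1P[_ Ps]; apply: sc.
have cK : [set c] \in K1.
  rewrite K1E; apply/andP; split.
    apply: chainKI.
    - by apply/set0Pn; exists c; rewrite in_set1.
    - by rewrite sub1set.
    - by move=> P Q; rewrite !in_set1 => /eqP-> /eqP->; rewrite le_refl.
  by apply/forall_inP=> P; rewrite in_set1 => /eqP ->; exact: le_refl.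
case/orP=> [/orP[/eqP->//|/andP[]//]|/imsetP[u uD ->]].
move: uD; rewrite D2E K1E => /andP[/andP[uK /forall_inP uc] _].
case/chainKP: uK => _ uX ch.
rewrite K1E; apply/andP; split.
  apply: chainKI; first by apply/set0Pn; exists c; rewrite setU11.
    by rewrite subUset sub1set cX.
  move=> P Q; rewrite !in_setU1 => /orP[/eqP->|Ps] /orP[/eqP->|Qin].
  - by rewrite le_refl.
  - by rewrite uc ?orbT.
  - by rewrite uc.
  - exact: ch.
apply/forall_inP=> P; rewrite in_setU1 => /orP[/eqP->|Ps]; [exact: le_refl|exact: uc].
Qed.

Lemma collapse2 : equiv_collapsible act H K1.
Proof.
rewrite eq2; apply: (@morse _ _ _ _ act1 actM (fun s => #|s|) (fun _ => c)).
- exact: ecoll_point.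
- move=> g s gH; rewrite D2E K1E => /andP[/andP[sK /forall_inP sc] cs].
  have /chainKP[_ sX _] := sK.
  rewrite D2E K1E chainK_act //=; apply/andP; split.
    apply/forall_inP=> _ /imsetP[P Ps ->].
    by rewrite -(act_c gH) (act_le gH (subsetP sX P Ps) cX) sc.
  apply/imsetP=> [[P Ps e]]; move/negP: cs; apply.
  have e' : act g P = act g c by rewrite act_c // -e.
  by rewrite -(act_inj e').
- by move=> g s gH _; rewrite act_c.
- by move=> s; rewrite D2E => /andP[].
- move=> s t; rewrite !D2E => /andP[_ cs] /andP[_ ct] e.
  by rewrite -(setU1K cs) -(setU1K ct) e.
- move=> s t; rewrite !D2E => /andP[_ cs] /andP[_ ct] sub ne.
  apply: proper_card; rewrite properEneq ne /=.
  apply/subsetP=> P Ps; move: (subsetP sub P Ps); rewrite in_setU1 => /orP[/eqP e|//].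
  by move: cs; rewrite -e Ps.
- move=> r s; rewrite in_set1 => /eqP -> ; rewrite D2E K1E => /andP[/andP[sK _] cs].
  case/chainKP: sK => /set0Pn[P Ps] _ _.
  apply/negP=> /subsetP/(_ P Ps); rewrite in_set1 => /eqP e.
  by move: cs; rewrite -e Ps.
Qed.

Theorem poset_collapse : equiv_collapsible act H chainK.
Proof. exact: collapse1 collapse2. Qed.

End PosetCollapse.

Local Open Scope group_scope.

Section Parts.
Variable n : nat.
Local Notation T := 'I_n.
Implicit Types (P Q R : part n) (g h k : {perm T}).

Lemma act_part1 P : act_part 1 P = P.
Proof.
rewrite /act_part -[RHS]imset_id; apply: eq_imset => B.
by rewrite -[RHS]imset_id; apply: eq_imset => x; rewrite perm1.
Qed.

Lemma act_partM g h P : act_part (g * h)%g P = act_part h (act_part g P).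
Proof.
rewrite /act_part -imset_comp; apply: eq_imset => B /=.
by rewrite -imset_comp; apply: eq_imset => x; rewrite permM.
Qed.

Lemma act_partK g P : act_part g^-1 (act_part g P) = P.
Proof. by rewrite -act_partM mulgV act_part1. Qed.

Lemma imset_permT g : g @: [set: T] = [set: T].
Proof.
apply/setP=> y; rewrite inE; apply/imsetP; exists (g^-1 y); rewrite ?inE //.
by rewrite permKV.
Qed.

Lemma act_indiscrete g : act_part g (indiscrete_part n) = indiscrete_part n.
Proof. by rewrite /act_part /indiscrete_part imset_set1 imset_permT. Qed.

Lemma act_discrete g : act_part g (discrete_part n) = discrete_part n.
Proof.
rewrite /act_part /discrete_part -imset_comp; apply/setP=> B.
apply/imsetP/imsetP => [[x _ ->]|[x _ ->]] /=.
  by exists (g x); rewrite ?inE // imset_set1.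
by exists (g^-1 x); rewrite ?inE //= imset_set1 permKV.
Qed.

Section OnePart.
Variable P : part n.
Hypothesis Pp : is_part P.

Lemma part_cover : cover P = [set: T].
Proof. by case/and3P: Pp => /eqP. Qed.
Lemma part_triv : trivIset P.
Proof. by case/and3P: Pp. Qed.
Lemma part_mem x : x \in pblock P x.
Proof. by rewrite mem_pblock part_cover inE. Qed.
Lemma part_pblock x : pblock P x \in P.
Proof. by rewrite pblock_mem // part_cover inE. Qed.
Lemma part_sym x y : (y \in pblock P x) = (x \in pblock P y).
Proof.
apply/idP/idP => h.
  by rewrite (same_pblock part_triv h) part_mem.
by rewrite (same_pblock part_triv h) part_mem.
Qed.
Lemma part_same x y : y \in pblock P x -> pblock P y = pblock P x.
Proof. by move=> h; apply: same_pblock part_triv h. Qed.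
Lemma part_blockE B x : B \in P -> x \in B -> B = pblock P x.
Proof. by move=> BP xB; rewrite (def_pblock part_triv BP xB). Qed.
Lemma part_ne0 B : B \in P -> exists x, x \in B.
Proof.
move=> BP; have: B != set0 by apply: (partition_neq0 Pp BP).
by case/set0Pn=> x; exists x.
Qed.
End OnePart.

Lemma refinesP P Q : is_part P -> is_part Q ->
  reflect (forall x y, y \in pblock P x -> y \in pblock Q x) (refines P Q).
Proof.
move=> Pp Qp; apply: (iffP forall_inP) => [h x y yx|h B BP].
  have /existsP[C /andP[CQ BC]] := h _ (part_pblock Pp x).
  have xC := subsetP BC _ (part_mem Pp x).
  by rewrite -(part_blockE Qp CQ xC); apply: (subsetP BC).
apply/existsP; case: (part_ne0 Pp BP) => x xB.
exists (pblock Q x); rewrite part_pblock //=.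
by apply/subsetP=> y; rewrite (part_blockE Pp BP xB); apply: h.
Qed.

Lemma part_ext P Q : is_part P -> is_part Q ->
  (forall x y, (y \in pblock P x) = (y \in pblock Q x)) -> P = Q.
Proof.
move=> Pp Qp h.
have key R S : is_part R -> is_part S ->
    (forall x y, (y \in pblock R x) = (y \in pblock S x)) -> R \subset S.
  move=> Rp Sp e; apply/subsetP=> B BR.
  case: (part_ne0 Rp BR) => x xB; rewrite (part_blockE Rp BR xB).
  have -> : pblock R x = pblock S x by apply/setP=> y; rewrite e.
  exact: part_pblock.
by apply/eqP; rewrite eqEsubset !key // => x y; rewrite h.
Qed.

Lemma refines_anti P Q : is_part P -> is_part Q -> refines P Q -> refines Q P -> P = Q.
Proof.
move=> Pp Qp /(refinesP Pp Qp) h1 /(refinesP Qp Pp) h2.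
by apply: part_ext => // x y; apply/idP/idP; [apply: h1|apply: h2].
Qed.

Lemma refines_refl P : refines P P.
Proof. by apply/forall_inP=> B BP; apply/existsP; exists B; rewrite BP subxx. Qed.

Lemma refines_trans P Q R : refines P Q -> refines Q R -> refines P R.
Proof.
move=> /forall_inP h1 /forall_inP h2; apply/forall_inP=> B BP.
have /existsP[C /andP[CQ BC]] := h1 B BP.
have /existsP[D /andP[DR CD]] := h2 C CQ.
by apply/existsP; exists D; rewrite DR (subset_trans BC CD).
Qed.

Lemma act_is_part g P : is_part P -> is_part (act_part g P).
Proof.
move=> Pp; apply/and3P; split.
- apply/eqP/setP=> y; rewrite inE; apply/bigcupP.
  exists (g @: pblock P (g^-1 y)); first by apply/imsetP; exists (pblock P (g^-1 y)); rewrite ?part_pblock.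
  by apply/imsetP; exists (g^-1 y); rewrite ?part_mem ?permKV.
- apply/trivIsetP=> _ _ /imsetP[B BP ->] /imsetP[C CP ->] ne.
  have BC : B != C by apply: contraNneq ne => ->.
  move/trivIsetP: (part_triv Pp) => tP; have := tP B C BP CP BC.
  move=> dis; rewrite disjoints_subset; apply/subsetP=> y /imsetP[a aB ->].
  rewrite inE; apply/imsetP=> [[b bC /perm_inj e]].
  by move: (disjointFr dis aB); rewrite e bC.
- apply/imsetP=> [[B BP e]]; case: (part_ne0 Pp BP) => x xB.
  by have := imset_f g xB; rewrite -e inE.
Qed.

Lemma pblock_act g P x : is_part P -> pblock (act_part g P) (g x) = g @: pblock P x.
Proof.
move=> Pp; apply: def_pblock; first exact: part_triv (act_is_part g Pp).
  by apply: imset_f; apply: part_pblock.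
by apply: imset_f; apply: part_mem.
Qed.

Lemma rel_act g P x y : is_part P ->
  (g y \in pblock (act_part g P) (g x)) = (y \in pblock P x).
Proof. by move=> Pp; rewrite pblock_act // mem_imset //; exact: perm_inj. Qed.

Lemma refines_act g P Q : is_part P -> is_part Q ->
  refines (act_part g P) (act_part g Q) = refines P Q.
Proof.
move=> Pp Qp; have gPp := act_is_part g Pp; have gQp := act_is_part g Qp.
apply/(refinesP gPp gQp)/(refinesP Pp Qp) => h x y.
  by rewrite -(rel_act g x y Pp) -(rel_act g x y Qp); apply: h.
by rewrite -(permKV g x) -(permKV g y) !rel_act //; apply: h.
Qed.

Lemma act_fixP g P : is_part P ->
  (act_part g P = P) <-> (forall x y, (g y \in pblock P (g x)) = (y \in pblock P x)).
Proof.
move=> Pp; split => [e x y|h].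
  by rewrite -{1}e rel_act.
apply: part_ext => //; first exact: act_is_part.
by move=> x y; rewrite -(permKV g x) -(permKV g y) rel_act // h.
Qed.

Lemma discreteP P : is_part P ->
  (P = discrete_part n) <-> (forall x y, y \in pblock P x -> y = x).
Proof.
move=> Pp; split => [e x y|h].
  have : pblock P x \in discrete_part n by rewrite -e part_pblock.
  case/imsetP=> z _ ez.
  have := part_mem Pp x; rewrite ez inE => /eqP exz.
  by rewrite exz inE => /eqP.
apply/setP=> B; apply/idP/imsetP => [BP|[x _ ->]].
  case: (part_ne0 Pp BP) => x xB; exists x => //.
  apply/setP=> y; rewrite inE (part_blockE Pp BP xB).
  apply/idP/eqP => [/h //|->]; exact: part_mem.
suff -> : [set x] = pblock P x by apply: part_pblock.
apply/setP=> y; rewrite inE; apply/eqP/idP => [->|/h //]; exact: part_mem.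
Qed.

Lemma indiscreteP P (x0 : T) : is_part P ->
  (P = indiscrete_part n) <-> (forall x y, y \in pblock P x).
Proof.
move=> Pp; split => [e x y|h].
  have : pblock P x \in indiscrete_part n by rewrite -e part_pblock.
  by rewrite inE => /eqP ->; rewrite inE.
have e : pblock P x0 = [set: T] by apply/setP=> y; rewrite inE h.
apply/setP=> B; rewrite inE; apply/idP/eqP => [BP|->].
  case: (part_ne0 Pp BP) => x xB; rewrite (part_blockE Pp BP xB).
  by apply/setP=> y; rewrite inE h.
by rewrite -e part_pblock.
Qed.

End Parts.


Section Iso.
Variable n : nat.
Local Notation T := 'I_n.
Variable G : {group {perm T}}.
Implicit Types (P Q R : part n) (g h k : {perm T}).

Definition stab (x : T) := [set k in G | k x == x].
Definition iso (x y : T) := [exists g in G, stab x == stab (g y)].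

Lemma isoP x y : reflect (exists2 g, g \in G & stab x = stab (g y)) (iso x y).
Proof.
by apply: (iffP exists_inP) => [[g gG /eqP e]|[g gG e]]; exists g => //; apply/eqP.
Qed.

Lemma GN k : k \in G -> k \in 'N(G).
Proof. by move=> kG; apply: (subsetP (normG G)). Qed.

Lemma stabJ g k z : g \in 'N(G) -> (k \in stab (g z)) = (k ^ g^-1 \in stab z).
Proof.
move=> gN; rewrite !inE memJ_norm ?groupV //; congr andb.
rewrite conjgE invgK !permM; apply/eqP/eqP => [->|e]; first by rewrite permK.
by move/(congr1 g): e; rewrite permKV.
Qed.

Lemma stab_eqJ g a b : g \in 'N(G) -> stab a = stab b -> stab (g a) = stab (g b).
Proof. by move=> gN e; apply/setP=> k; rewrite !stabJ // e. Qed.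

Lemma iso_refl x : iso x x.
Proof. by apply/isoP; exists 1; rewrite ?group1 ?perm1. Qed.

Lemma iso_sym x y : iso x y -> iso y x.
Proof.
case/isoP=> g gG e; apply/isoP; exists g^-1; rewrite ?groupV //.
by rewrite (stab_eqJ (GN (groupVr gG)) e) permK.
Qed.

Lemma iso_trans x y z : iso x y -> iso y z -> iso x z.
Proof.
case/isoP=> g gG e1 /isoP[h hG e2]; apply/isoP; exists (h * g); rewrite ?groupM //.
by rewrite e1 (stab_eqJ (GN gG) e2) permM.
Qed.

Lemma iso_act g x y : g \in 'N(G) -> iso x y -> iso (g x) (g y).
Proof.
move=> gN /isoP[h hG e]; apply/isoP; exists (h ^ g); first by rewrite memJ_norm.
by rewrite (stab_eqJ gN e) conjgE !permM permK.
Qed.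

Lemma iso_actE g x y : g \in 'N(G) -> iso (g x) (g y) = iso x y.
Proof.
move=> gN; apply/idP/idP => [h|]; last exact: iso_act.
by have := iso_act (groupVr gN) h; rewrite !permK.
Qed.

Lemma iso_orb k y : k \in G -> iso y (k y).
Proof. by move=> kG; apply/isoP; exists k^-1; rewrite ?groupV ?permK. Qed.

Lemma iso_eqrel : equivalence_rel iso.
Proof.
move=> x y z; split; first exact: iso_refl.
move=> xy; apply/idP/idP => h; first exact: iso_trans (iso_sym xy) h.
exact: iso_trans xy h.
Qed.

Definition cpart := equivalence_partition iso [set: T].

Lemma cpart_part : is_part cpart.
Proof. by apply: equivalence_partitionP => x y z _ _ _; apply: iso_eqrel. Qed.

Lemma cpart_rel x y : (y \in pblock cpart x) = iso x y.
Proof. by rewrite pblock_equivalence_partition ?inE // => a b c _ _ _; apply: iso_eqrel. Qed.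

Definition meet Q := equivalence_partition (fun x y => (y \in pblock Q x) && iso x y) [set: T].

Lemma meet_eqrel Q : is_part Q -> {in [set: T] & &,
  equivalence_rel (fun x y => (y \in pblock Q x) && iso x y)}.
Proof.
move=> Qp x y z _ _ _; split; first by rewrite part_mem ?iso_refl.
case/andP=> yx ixy; rewrite (part_same Qp yx); congr andb.
apply/idP/idP => h; first exact: iso_trans (iso_sym ixy) h.
exact: iso_trans ixy h.
Qed.

Lemma meet_part Q : is_part Q -> is_part (meet Q).
Proof. by move=> Qp; apply: equivalence_partitionP; apply: meet_eqrel. Qed.

Lemma meet_rel Q x y : is_part Q ->
  (y \in pblock (meet Q) x) = (y \in pblock Q x) && iso x y.
Proof. by move=> Qp; rewrite pblock_equivalence_partition ?inE //; apply: meet_eqrel. Qed.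

Lemma iso_all_isotypic : (forall x y, iso x y) -> isotypic G.
Proof.
move=> hall x y; case/isoP: (hall x y) => g gG e.
set y' := g y.
pose f z := if [pick k in G | k x == z] is Some k then k y' else z.
have stabE a b : a \in G -> b \in G -> a x = b x -> a y' = b y'.
  move=> aG bG eab.
  have : a * b^-1 \in stab x by rewrite inE groupM ?groupV // permM eab permK eqxx.
  rewrite e inE permM => /andP[_ /eqP h].
  by have := congr1 b h; rewrite permKV.
have fE k : k \in G -> f (k x) = k y'.
  move=> kG; rewrite /f; case: pickP => [k' /andP[k'G /eqP e']|/(_ k)]; last by rewrite kG eqxx.
  exact: stabE.
exists f; split.
- move=> _ _ /imsetP[a aG ->] /imsetP[b bG ->]; rewrite !fE // => eab.
  have : a * b^-1 \in stab y' by rewrite inE groupM ?groupV // permM eab permK eqxx.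
  rewrite -e inE permM => /andP[_ /eqP h].
  by have := congr1 b h; rewrite permKV.
- apply/setP=> z; apply/imsetP/imsetP => [[_ /imsetP[a aG ->] ->]|[b bG ->]].
    by rewrite fE //; exists (g * a); rewrite ?groupM // permM.
  exists ((g^-1 * b) x); first by apply/imsetP; exists (g^-1 * b); rewrite ?groupM ?groupV.
  by rewrite fE ?groupM ?groupV // /y' !permM permK.
- move=> k z kG /imsetP[a aG ->].
  by rewrite -permM !fE ?groupM // permM.
Qed.

End Iso.


Section Main.
Variable n : nat.
Local Notation T := 'I_n.
Variable G : {group {perm T}}.
Implicit Types (P Q R : part n) (g h k : {perm T}).

Definition Xs := [set P | in_Pi_fix G P].

Lemma XP P : P \in Xs -> [/\ is_part P, P != discrete_part n, P != indiscrete_part n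
   & forall k, k \in G -> act_part k P = P].
Proof.
rewrite inE /in_Pi_fix /in_Pi => /andP[/and3P[Pp Pd Pi] /forall_inP h].
by split=> // k kG; apply/eqP; apply: h.
Qed.

Lemma XI P : is_part P -> P != discrete_part n -> P != indiscrete_part n ->
  (forall k, k \in G -> act_part k P = P) -> P \in Xs.
Proof.
move=> Pp Pd Pi h; rewrite inE /in_Pi_fix /in_Pi Pp Pd Pi /=.
by apply/forall_inP=> k kG; rewrite h.
Qed.

Lemma fixG_rel P k x y : is_part P -> (forall k, k \in G -> act_part k P = P) -> k \in G ->
  (k y \in pblock P (k x)) = (y \in pblock P x).
Proof. by move=> Pp h kG; apply: ((act_fixP k Pp).1 (h k kG)). Qed.

Lemma meet_ndiscrete Q : Q \in Xs -> meet G Q != discrete_part n.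
Proof.
case/XP=> Qp Qd Qi Qf; apply/eqP=> /(discreteP (meet_part G Qp)) hd.
have hd' x y : y \in pblock Q x -> iso G x y -> y = x.
  by move=> yx ixy; apply: hd; rewrite meet_rel // yx ixy.
case: (boolP [forall x, forall y, (y \in pblock Q x) ==> (y == x)]) => [/forallP h|].
  move/eqP: Qd; apply; apply/(discreteP Qp) => x y yx.
  by have /forallP/(_ y)/implyP/(_ yx)/eqP := h x.
case/forallPn => x /forallPn[y]; rewrite negb_imply => /andP[yx /negP nyx].
have sub a b : b \in pblock Q a -> stab G a \subset stab G b.
  move=> ba; apply/subsetP=> k; rewrite !inE => /andP[kG /eqP ka]; rewrite kG /=.
  apply/eqP; apply: hd'; last by apply: iso_orb.
  rewrite (part_same Qp ba) -{1}ka (fixG_rel _ _ Qp Qf kG) //.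
have xy : x \in pblock Q y by rewrite -part_sym.
have ixy : iso G x y.
  apply/isoP; exists 1; rewrite ?group1 // perm1.
  by apply/eqP; rewrite eqEsubset !sub.
by apply: nyx; apply/eqP; apply: hd'.
Qed.

End Main.

Theorem lemma6p3 (n : nat) (G : {group {perm 'I_n}}) :
  ~ isotypic G ->
  equiv_collapsible (@act_part n) ('N(G))%g (fixed_order_complex G).
Proof.
move=> niso.
have [x0 [y0 nxy]] : exists x, exists y, ~~ iso G x y.
  case: (boolP [forall x, forall y, iso G x y]) => [/forallP h|].
    by case: niso; apply: iso_all_isotypic => x y; have /forallP := h x; apply.
  by case/forallPn => x /forallPn [y ny]; exists x, y.
have eqK : fixed_order_complex G = chainK (Xs G) (@refines n).
  apply/setP=> s; rewrite /fixed_order_complex /chainK !inE /chainb.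
  congr [&& _, _ & _].
  apply/forall_inP/subsetP => h P Ps; first by rewrite inE h.
  by have := h P Ps; rewrite inE.
rewrite eqK.
have cX : cpart G \in Xs G.
  apply: XI; first exact: cpart_part.
  - apply/eqP=> /(discreteP (cpart_part G)) hd; move/negP: nxy; apply.
    have fix1 k z : k \in G -> k z = z.
      by move=> kG; apply: hd; rewrite cpart_rel iso_orb.
    have stabT z : stab G z = G.
      by apply/setP=> k; rewrite /stab inE; case: (boolP (k \in G)) => // kG; rewrite fix1 ?eqxx.
    by apply/isoP; exists 1; rewrite ?group1 // perm1 !stabT.
  - apply/eqP=> /(indiscreteP x0 (cpart_part G)) hi; move/negP: nxy; apply.
    by rewrite -cpart_rel hi.
  - move=> k kG; apply/(act_fixP k (cpart_part G)) => x y.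
    by rewrite !cpart_rel iso_actE // GN.
apply: (@poset_collapse _ _ (@act_part n) ('N(G))%G (@act_part1 n) (@act_partM n)
          (Xs G) (@refines n) (cpart G) (meet G)).
- by move=> P _; apply: refines_refl.
- by move=> P Q /XP[Pp _ _ _] /XP[Qp _ _ _]; apply: refines_anti.
- by move=> P Q R _ _ _; apply: refines_trans.
- move=> g P gN /XP[Pp Pd Pi Pf]; apply: XI; first exact: act_is_part.
  + by apply: contraNneq Pd => e; rewrite -(act_partK g P) e act_discrete.
  + by apply: contraNneq Pi => e; rewrite -(act_partK g P) e act_indiscrete.
  + move=> k kG.
    have [k' k'G ek] : exists2 k', k' \in G & g * k = k' * g.
      exists (k ^ g^-1); first by rewrite memJ_norm ?groupV.
      by rewrite conjgE invgK !mulgA -(mulgA _ g^-1) mulVg mulg1.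
    by rewrite -act_partM ek act_partM Pf.
- by move=> g P Q gN /XP[Pp _ _ _] /XP[Qp _ _ _]; apply: refines_act.
- exact: cX.
- move=> g gN; apply/(act_fixP g (cpart_part G)) => x y.
  by rewrite !cpart_rel iso_actE.
- move=> Q QX; have := meet_ndiscrete QX; case/XP: QX => Qp Qd Qi Qf mnd.
  apply: XI => //; first exact: meet_part.
  + apply/eqP=> /(indiscreteP x0 (meet_part G Qp)) hi; move/eqP: Qi; apply.
    apply/(indiscreteP x0 Qp) => x y.
    by have := hi x y; rewrite meet_rel // => /andP[].
  + move=> k kG; apply/(act_fixP k (meet_part G Qp)) => x y.
    by rewrite !meet_rel // (fixG_rel _ _ Qp Qf kG) iso_actE // GN.
- move=> Q /XP[Qp _ _ _]; apply/(refinesP (meet_part G Qp) Qp) => x y.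
  by rewrite meet_rel // => /andP[].
- move=> Q /XP[Qp _ _ _]; apply/(refinesP (meet_part G Qp) (cpart_part G)) => x y.
  by rewrite meet_rel // cpart_rel => /andP[].
- move=> Q R /XP[Qp _ _ _] /XP[Rp _ _ _] /(refinesP Rp Qp) h1
    /(refinesP Rp (cpart_part G)) h2.
  apply/(refinesP Rp (meet_part G Qp)) => x y yx.
  by rewrite meet_rel // h1 //= -cpart_rel h2.
Qed.
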